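(* Let $(\Omega,\mathbb B(\Omega),\mu,T)$ be a measure-preserving dynamical system and $\mathbf X$ an $\mathbb R^N$-valued random vector on $(\Omega,\mathbb B(\Omega))$ such that $h_\mu(T)=\lim_{d\to\infty}h_\mu(T,\mathcal P^{\mathbf X}(d))$, and such that either (a) there is $d_0\in\mathbb N$ with $h^{\mathbf X}_\mu(T,d)\ge h^{\mathbf X}_\mu(T,d+1)$ for all $d\ge d_0$, or (b) $\lim_{d\to\infty}h^{\mathbf X}_{\mu,\triangle}(T,d)$ exists. If $h_\mu(T)=\limsup_{d\to\infty}h^{\mathbf X}_\mu(T,d)$, then $h_\mu(T)=\limsup_{d\to\infty}h^{\mathbf X}_{\mu,\mathrm{cond}}(T,d)$.
   Context: A measure-preserving dynamical system $(\Omega,\mathbb B(\Omega),\mu,T)$ consists of a nonempty topological space $\Omega$ with Borel $\sigma$-algebra $\mathbb B(\Omega)$, a probability measure $\mu$, and a measurable map $T:\Omega\to\Omega$ with $\mu(T^{-1}B)=\mu(B)$ for all $B\in\mathbb B(\Omega)$. For a finite partition $\mathcal P=\{P_0,\dots,P_l\}\subset\mathbb B(\Omega)$ of $\Omega$: $H(\mathcal P)=-\sum_{P\in\mathcal P}\mu(P)\ln\mu(P)$ (with $0\ln0=0$); $\mathcal P_n$ is the partition consisting of the sets $P_{a_0}\cap T^{-1}(P_{a_1})\cap\dots\cap T^{-(n-1)}(P_{a_{n-1}})$, $a_i\in\{0,\dots,l\}$; $h_\mu(T,\mathcal P)=\lim_{n\to\infty}(H(\mathcal P_{n+1})-H(\mathcal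 P_n))$; the Kolmogorov–Sinai entropy is $h_\mu(T)=\sup_{\mathcal P}h_\mu(T,\mathcal P)$ over finite partitions. Let $\Pi_d$ be the set of permutations of $\{0,1,\dots,d\}$. A vector $(x_0,\dots,x_d)\in\mathbb R^{d+1}$ has ordinal pattern $\pi=(r_0,\dots,r_d)\in\Pi_d$ if $x_{r_0}\ge x_{r_1}\ge\dots\ge x_{r_d}$ and $r_{l-1}>r_l$ whenever $x_{r_{l-1}}=x_{r_l}$. For a random vector $\mathbf X=(X_1,\dots,X_N)$ and $d\in\mathbb N$, the ordinal partition $\mathcal P^{\mathbf X}(d)$ consists of the sets $P_{(\pi_1,\dots,\pi_N)}=\{\omega: (X_i(T^{d}\omega),X_i(T^{d-1}\omega),\dots,X_i(T\omega),X_i(\omega))\text{ has ordinal pattern }\pi_i\text{ for } i=1,\dots,N\}$, $\pi_i\in\Pi_d$. Permutation entropy: $h^{\mathbf X}_\mu(T,d)=\frac1d H(\mathcal P^{\mathbf X}(d))$. Sorting entropy: $h^{\mathbf X}_{\mu,\triangle}(T,d)=H(\mathcal P^{\mathbf X}(d+1))-H(\mathcal P^{\mathbf X}(d))$. Conditional entropy of ordinal patterns: $h^{\mathbf X}_{\mu,\mathrm{cond}}(T,d)=H(\mathcal P^{\mathbf X}(d)_2)-H(\mathcal P^{\mathbf X}(d))$. *)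

(* Defs.v *)
From HB Require Import structures.
From mathcomp Require Import all_boot all_order all_algebra all_fingroup.
From mathcomp Require Import all_classical all_reals all_analysis.
Set Implicit Arguments. Unset Strict Implicit. Unset Printing Implicit Defensive.
Import Order.TTheory GRing.Theory Num.Theory.
Local Open Scope classical_set_scope.
Local Open Scope ring_scope.

Definition borel (S : ptopologicalType) := g_sigma_algebraType (@open S).

Section Entropy.
Context (R : realType) (d : measure_display) (Om : measurableType d).

(* Shannon entropy of a finite indexed family of sets (a finite partition
   when the family is a partition); 0 ln 0 = 0 *)
Definition Hent (mu : set Om -> \bar R) (I : finType) (P : I -> set Om) : R :=
  - \sum_(i : I) (fine (mu (P i)) * ln (fine (mu (P i)))).

(* finite measurable partition indexed by I (empty blocks allowed) *)
Definition is_partition (I : finType) (P : I -> set Om) : Prop :=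
  (forall i, measurable (P i)) /\
  (forall i j, i != j -> P i `&` P j = set0) /\
  (forall w, exists i, P i w).

Definition joinP (T : Om -> Om) (I : finType) (P : I -> set Om) (n : nat)
  : {ffun 'I_n -> I} -> set Om :=
  fun a => [set w | forall j : 'I_n, P (a j) (iter j T w)].
Arguments joinP T {I} P n _.

Definition h_part (mu : set Om -> \bar R) (T : Om -> Om) (I : finType)
  (P : I -> set Om) : R :=
  limn (fun n => Hent mu (joinP T P n.+1) - Hent mu (joinP T P n)).

Definition hKS (mu : set Om -> \bar R) (T : Om -> Om) : \bar R :=
  ereal_sup [set x | exists (l : nat) (P : 'I_l.+1 -> set Om),
                       is_partition P /\ x = (h_part mu T P)%:E].

(* (x_0,...,x_dd) has ordinal pattern pi = (r_0,...,r_dd), r_l = pi l *)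
Definition has_pattern (dd : nat) (x : 'I_dd.+1 -> R) (pi : 'S_dd.+1) : Prop :=
  forall l : nat, (l < dd)%N ->
    x (pi (inord l.+1)) <= x (pi (inord l)) /\
    (x (pi (inord l)) = x (pi (inord l.+1)) ->
       (pi (inord l.+1) < pi (inord l))%N).

Definition ord_part (T : Om -> Om) (N : nat) (X : 'I_N -> Om -> R) (dd : nat)
  : {ffun 'I_N -> 'S_dd.+1} -> set Om :=
  fun pis => [set w | forall i : 'I_N,
     has_pattern (fun k : 'I_dd.+1 => X i (iter (dd - k) T w)) (pis i)].
Arguments ord_part T {N} X dd _.

Definition perm_ent mu T N (X : 'I_N -> Om -> R) (dd : nat) : R :=
  Hent mu (ord_part T X dd) / dd%:R.
Definition sort_ent mu T N (X : 'I_N -> Om -> R) (dd : nat) : R :=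
  Hent mu (ord_part T X dd.+1) - Hent mu (ord_part T X dd).
Definition cond_ent mu T N (X : 'I_N -> Om -> R) (dd : nat) : R :=
  Hent mu (joinP T (ord_part T X dd) 2) - Hent mu (ord_part T X dd).

End Entropy.
Arguments joinP {d Om} T {I} P n _ _.
Arguments ord_part {R d Om} T {N} X dd _ _.

(* Main.v *)
Require Import Defs.
From HB Require Import structures.
From mathcomp Require Import all_boot all_order all_algebra all_fingroup.
From mathcomp Require Import all_classical all_reals all_analysis.
From mathcomp Require Import lra zify.
Import Order.TTheory GRing.Theory Num.Theory.
Local Open Scope classical_set_scope.
Local Open Scope ring_scope.

Module Part1.
Local Set Implicit Arguments. Local Unset Strict Implicit.
Section Core.
Context (R : realType) (d : measure_display) (Om : measurableType d)
  (mu : probability Om R).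

Definition fib (I : Type) (f : Om -> I) (i : I) : set Om := f @^-1` [set i].
Definition mfin (I : Type) (f : Om -> I) := forall i, measurable (fib f i).
Definition pr (I : Type) (f : Om -> I) i : R := fine (mu (fib f i)).
Definition Hf (I : finType) (f : Om -> I) : R := Hent mu (fib f).

Lemma muE B : measurable B -> mu B = (fine (mu B))%:E.
Proof. by move=> mB; rewrite fineK// fin_num_measure. Qed.

Lemma pr_ge0 I (f : Om -> I) i : 0 <= pr f i.
Proof. by rewrite /pr fine_ge0. Qed.

Lemma pr_le1 I (f : Om -> I) i : mfin f -> pr f i <= 1.
Proof.
move=> mf; rewrite /pr -lee_fin -muE//; exact: probability_le1.
Qed.

Lemma in_bigU (J : eqType) (s : seq J) (P : pred J) (F : J -> set Om) x :
  (\big[setU/set0]_(j <- s | P j) F j) x <-> exists j, [/\ j \in s, P j & F j x].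
Proof.
elim: s => [|j s IH]; first by rewrite big_nil; split => // -[? []].
rewrite big_cons; case: ifP => Pj.
  split.
    case=> [Fx|/IH [k [ks Pk Fk]]]; first by exists j; rewrite inE eqxx.
    by exists k; rewrite inE ks orbT.
  move=> [k [+ Pk Fk]]; rewrite inE => /orP [/eqP kj|ks]; first by left; rewrite -kj.
  by right; apply/IH; exists k.
rewrite IH; split => -[k [ks Pk Fk]]; exists k; first by rewrite inE ks orbT.
split=> //; move: ks; rewrite inE => /orP [/eqP kj|//]; by rewrite kj Pj in Pk.
Qed.

Lemma mu_bigU (J : eqType) (s : seq J) (P : pred J) (F : J -> set Om) :
  uniq s -> (forall j, measurable (F j)) ->
  (forall i j, i != j -> F i `&` F j = set0) ->
  mu (\big[setU/set0]_(j <- s | P j) F j) = (\sum_(j <- s | P j) mu (F j))%E.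
Proof.
move=> + mF dF; elim: s => [|j s IH]; first by rewrite !big_nil measure0.
rewrite /= big_cons [in RHS]big_cons => /andP [js us]; case: ifP => Pj; last exact: IH.
rewrite measureU//; first by congr (_ + _)%E; exact: IH.
- by apply: bigsetU_measurable.
apply/seteqP; split => // x [Fx /in_bigU [k [ks _ Fk]]].
have jk : j != k by apply: contraNneq js => ->.
by have := dF _ _ jk; rewrite -subset0 => /(_ x); apply.
Qed.

Lemma fib_comp (I : eqType) (J : finType) (f : Om -> J) (phi : J -> I) i :
  fib (phi \o f) i = \big[setU/set0]_(j <- index_enum J | phi j == i) fib f j.
Proof.
apply/seteqP; split => x.
  move=> /= fx; apply/in_bigU; exists (f x); split => //.
  by apply/eqP.
by move=> /in_bigU [j [_ /eqP <- fx]]; rewrite /fib /= fx.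
Qed.

Lemma mfin_comp (I : eqType) (J : finType) (f : Om -> J) (phi : J -> I) :
  mfin f -> mfin (phi \o f).
Proof. by move=> mf i; rewrite fib_comp; apply: bigsetU_measurable. Qed.

Lemma fib_disj (J : eqType) (f : Om -> J) i j : i != j -> fib f i `&` fib f j = set0.
Proof.
move=> ij; apply/seteqP; split => // x [fi fj]; move: ij.
by rewrite /fib /= in fi fj; rewrite -fi -fj eqxx.
Qed.

Lemma pr_comp (I : eqType) (J : finType) (f : Om -> J) (phi : J -> I) i :
  mfin f -> pr (phi \o f) i = \sum_(j | phi j == i) pr f j.
Proof.
move=> mf; rewrite /pr fib_comp mu_bigU//; last 2 first.
- exact: index_enum_uniq.
- by move=> ? ?; apply: fib_disj.
rewrite (eq_bigr (fun j => (pr f j)%:E)); last by move=> j _; rewrite -muE.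
by rewrite sumEFin.
Qed.

Lemma sum_pr (J : finType) (f : Om -> J) : mfin f -> \sum_j pr f j = 1.
Proof.
move=> mf; have := pr_comp (fun=> tt) tt mf.
rewrite (eq_bigl xpredT) // => <-.
rewrite /pr /fib (_ : _ @^-1` _ = setT); last by apply/seteqP; split => // x.
by rewrite probability_setT.
Qed.

Lemma sum_marg (I J : finType) (f : Om -> J) (phi : J -> I) (G : I -> R) :
  mfin f -> \sum_j pr f j * G (phi j) = \sum_i pr (phi \o f) i * G i.
Proof.
move=> mf; rewrite (partition_big phi xpredT)//; apply: eq_bigr => i _.
rewrite pr_comp// big_distrl; apply: eq_bigr => j /eqP <-//.
Qed.

Lemma pr_le_comp (I J : finType) (f : Om -> J) (phi : J -> I) j :
  mfin f -> pr f j <= pr (phi \o f) (phi j).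
Proof.
move=> mf; rewrite pr_comp// (bigD1 j)//= lerDl; apply: sumr_ge0 => *; exact: pr_ge0.
Qed.

Lemma HfE (I : finType) (f : Om -> I) : Hf f = - \sum_i pr f i * ln (pr f i).
Proof. by []. Qed.

Lemma Hf_comp (I J : finType) (f : Om -> J) (phi : J -> I) :
  mfin f -> Hf (phi \o f) <= Hf f.
Proof.
move=> mf; rewrite !HfE lerN2 -sum_marg//; apply: ler_sum => j _.
have [->|pj] := eqVneq (pr f j) 0; first by rewrite !mul0r.
have pj0 : 0 < pr f j by rewrite lt_def pj pr_ge0.
rewrite ler_wpM2l ?pr_ge0// ler_ln ?posrE//; first exact: pr_le_comp.
exact: lt_le_trans (pr_le_comp phi j mf).
Qed.


Lemma Hf_le (I J : finType) (f : Om -> J) (g : Om -> I) (w0 : Om) :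
  mfin f -> (forall w w', f w = f w' -> g w = g w') -> Hf g <= Hf f /\ mfin g.
Proof.
move=> mf fg; pose phi b := g (xget w0 [set w | f w = b]).
have -> : g = phi \o f.
  apply/funext => w; rewrite /phi /=; case: xgetP => [w' _ /= fw'|/(_ w)/(_ erefl)//].
  exact: fg.
by split; [exact: Hf_comp | exact: mfin_comp].
Qed.

Lemma Hf_same (I J : finType) (f : Om -> J) (g : Om -> I) (w0 : Om) :
  mfin f -> (forall w w', f w = f w' <-> g w = g w') -> Hf f = Hf g.
Proof.
move=> mf fg; have [l1 mg] := Hf_le w0 mf (fun w w' => (fg w w').1).
have [l2 _] := Hf_le w0 mg (fun w w' => (fg w w').2).
by apply/eqP; rewrite eq_le l1 l2.
Qed.

Lemma mfinT (I : Type) (f : Om -> I) (T : Om -> Om) :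
  measurable_fun setT T -> mfin f -> mfin (f \o T).
Proof. by move=> mT mf i; have := mT measurableT _ (mf i); rewrite setTI. Qed.

Lemma Hf_T (I : finType) (f : Om -> I) (T : Om -> Om) :
  measurable_fun setT T -> (forall B, measurable B -> mu (T @^-1` B) = mu B) ->
  mfin f -> Hf (f \o T) = Hf f.
Proof.
move=> mT muT mf; rewrite !HfE; congr (- _); apply: eq_bigr => i _.
by rewrite /pr (_ : fib (f \o T) i = T @^-1` fib f i)// muT.
Qed.

Lemma term_ineq (p m : R) : 0 <= p -> 0 <= m -> (0 < p -> 0 < m) ->
  p * ln m - p * ln p <= m - p.
Proof.
move=> p0 m0 pm; have [->|pn0] := eqVneq p 0; first by rewrite !mul0r !subr0.
have pp : 0 < p by rewrite lt_def pn0.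
have mp := pm pp.
rewrite -mulrBr -ln_div ?posrE//.
have H : ln (m / p) <= m / p - 1.
  have t0 : 0 < m / p by rewrite divr_gt0.
  move: t0; set t := m / p => t0.
  have := @le_ln1Dx R (t - 1); rewrite addrCA subrr addr0; apply; lra.
rewrite -(ler_pM2l pp) in H; apply: le_trans H _.
by rewrite mulrBr mulr1 mulrCA divff ?mulr1// gt_eqF.
Qed.

Lemma gibbs (K : finType) (p m : K -> R) :
  (forall k, 0 <= p k) -> (forall k, 0 <= m k) -> (forall k, 0 < p k -> 0 < m k) ->
  \sum_k m k <= \sum_k p k ->
  \sum_k p k * ln (m k) <= \sum_k p k * ln (p k).
Proof.
move=> p0 m0 pm smp.
have H : \sum_k (p k * ln (m k) - p k * ln (p k)) <= \sum_k (m k - p k).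
  by apply: ler_sum => k _; exact: term_ineq (p0 k) (m0 k) (@pm k).
rewrite !sumrB in H; lra.
Qed.

Lemma sum_pair1 (B C : finType) (F : B * C -> R) b :
  \sum_(k | k.1 == b) F k = \sum_c F (b, c).
Proof.
rewrite -(@big_pred1_eq R 0 +%R _ b (fun i => \sum_c F (i, c))) pair_big /=.
by apply: eq_big => [[x y]|[x y]] //=; rewrite andbT.
Qed.

Lemma Hf_submod (A B C : finType) (f1 : Om -> A) (f2 : Om -> B) (f3 : Om -> C) :
  mfin (fun w => ((f1 w, f2 w), f3 w)) ->
  Hf (fun w => ((f1 w, f2 w), f3 w)) + Hf f2 <=
  Hf (fun w => (f1 w, f2 w)) + Hf (fun w => (f2 w, f3 w)).
Proof.
set F := (fun w => ((f1 w, f2 w), f3 w)) => mF.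
pose ph12 (k : (A * B) * C) := k.1.
pose ph23 (k : (A * B) * C) := (k.1.2, k.2).
pose ph2 (k : (A * B) * C) := k.1.2.
have e12 : (fun w => (f1 w, f2 w)) = ph12 \o F by [].
have e23 : (fun w => (f2 w, f3 w)) = ph23 \o F by [].
have e2 : f2 = ph2 \o F by [].
have m12 : mfin (ph12 \o F) by exact: mfin_comp.
have m23 : mfin (ph23 \o F) by exact: mfin_comp.
set p := pr F.
set q := pr (ph12 \o F).
set r := pr (ph23 \o F).
set s := pr (ph2 \o F).
have pq k : p k <= q (ph12 k) by exact: pr_le_comp.
have pr' k : p k <= r (ph23 k) by exact: pr_le_comp.
have ps k : p k <= s (ph2 k) by exact: pr_le_comp.
have rs b : \sum_c r (b, c) = s b.
  rewrite -sum_pair1 /s /r (_ : ph2 \o F = (fun k => k.1) \o (ph23 \o F))//.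
  by rewrite pr_comp.
rewrite e12 e23 e2 !HfE -/p -/q -/r -/s.
rewrite -(sum_marg ph12 (fun i => ln (q i)) mF) -(sum_marg ph23 (fun i => ln (r i)) mF).
rewrite -(sum_marg ph2 (fun i => ln (s i)) mF) -/p.
pose m k := q (ph12 k) * r (ph23 k) / s (ph2 k).
have G : \sum_k p k * ln (m k) <= \sum_k p k * ln (p k).
  apply: gibbs.
  - by move=> k; exact: pr_ge0.
  - by move=> k; rewrite /m !mulr_ge0 ?invr_ge0 ?pr_ge0.
  - move=> k pk; rewrite /m !mulr_gt0 ?invr_gt0//.
    + exact: lt_le_trans (pq k).
    + exact: lt_le_trans (pr' k).
    + exact: lt_le_trans (ps k).
  have -> : \sum_k m k = \sum_ab \sum_c m (ab, c).
    by rewrite pair_bigA; apply: eq_bigr => -[].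
  rewrite (sum_pr mF) -(sum_pr m12); apply: ler_sum => ab _.
  rewrite /m /= (eq_bigr (fun c => q ab / s ab.2 * r (ab.2, c))); last first.
    by move=> c _; rewrite mulrAC.
  rewrite -big_distrr /= rs.
  have [->|s0] := eqVneq (s ab.2) 0; first by rewrite invr0 !mulr0 pr_ge0.
  by rewrite divfK.
have E : \sum_k p k * ln (m k) = \sum_k p k * ln (q (ph12 k)) +
   \sum_k p k * ln (r (ph23 k)) - \sum_k p k * ln (s (ph2 k)).
  rewrite -big_split -sumrB; apply: eq_bigr => k _.
  have [->|pk] := eqVneq (p k) 0; first by rewrite !mul0r /= addr0 subr0.
  have pk0 : 0 < p k by rewrite lt_def pk pr_ge0.
  have q0 : 0 < q (ph12 k) by exact: lt_le_trans (pq k).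
  have r0 : 0 < r (ph23 k) by exact: lt_le_trans (pr' k).
  have s0 : 0 < s (ph2 k) by exact: lt_le_trans (ps k).
  rewrite /m ln_div ?posrE ?mulr_gt0// lnM ?posrE//.
  by rewrite !mulrDr mulrN.
rewrite E in G; lra.
Qed.


Lemma in_bigI (J : eqType) (s : seq J) (A : J -> set Om) x :
  (\big[setI/setT]_(j <- s) A j) x <-> (forall j, j \in s -> A j x).
Proof.
elim: s => [|j s IH]; first by rewrite big_nil; split.
rewrite big_cons; split.
  by move=> [Ax /IH H] k; rewrite inE => /orP [/eqP->|/H].
move=> H; split; first by apply: H; rewrite inE eqxx.
by apply/IH => k ks; apply: H; rewrite inE ks orbT.
Qed.

Lemma mfin_ffun (J : finType) (I : eqType) (F : J -> Om -> I) :
  (forall j, mfin (F j)) -> mfin (fun w => [ffun j => F j w]).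
Proof.
move=> mF a.
have -> : fib (fun w => [ffun j => F j w]) a =
    \big[setI/setT]_(j <- index_enum J) fib (F j) (a j).
  apply/seteqP; split => x.
    by move=> /= <-; apply/in_bigI => j _; rewrite /fib /= ffunE.
  move=> /in_bigI H; rewrite /fib /=; apply/ffunP => j; rewrite ffunE.
  by apply: H; rewrite mem_index_enum.
by apply: bigsetI_measurable => j _; apply: mF.
Qed.

Lemma mfin_ext (I : Type) (f g : Om -> I) : (forall w, f w = g w) -> mfin f -> mfin g.
Proof. by move=> fg; rewrite (_ : g = f)//; apply/funext => w; rewrite fg. Qed.

Lemma mfin_pair (A B : Type) (f : Om -> A) (g : Om -> B) :
  mfin f -> mfin g -> mfin (fun w => (f w, g w)).
Proof.
move=> mf mg [a b]; rewrite (_ : fib _ _ = fib f a `&` fib g b).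
  exact: measurableI.
apply/seteqP; split => x; rewrite /fib /=; first by case=> -> ->.
by case=> -> ->.
Qed.

Lemma mfin_iter (I : Type) (g : Om -> I) (T : Om -> Om) k :
  measurable_fun setT T -> mfin g -> mfin (fun w => g (iter k T w)).
Proof.
move=> mT mg; elim: k => [|k IH]; first exact: mfin_ext mg.
apply: mfin_ext (mfinT mT IH) => w /=; by rewrite -iterSr.
Qed.

Definition jn (I : Type) (g : Om -> I) (T : Om -> Om) n (w : Om) : {ffun 'I_n -> I} :=
  [ffun j : 'I_n => g (iter j T w)].

Lemma joinP_fib (I : finType) (g : Om -> I) T n :
  joinP T (fib g) n = fib (jn g T n).
Proof.
apply/funext => a; apply/seteqP; split => w; rewrite /joinP /fib /jn /=.
  by move=> H; apply/ffunP => j; rewrite ffunE; apply: H.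
by move=> <- j; rewrite ffunE.
Qed.

Lemma mfin_jn (I : eqType) (g : Om -> I) T n :
  measurable_fun setT T -> mfin g -> mfin (jn g T n).
Proof. by move=> mT mg; apply: mfin_ffun => j; apply: mfin_iter. Qed.

Lemma jn_eq (I : Type) (g : Om -> I) T n w w' :
  jn g T n w = jn g T n w' <-> (forall k, (k < n)%N -> g (iter k T w) = g (iter k T w')).
Proof.
split.
  by move=> /ffunP H k kn; have := H (Ordinal kn); rewrite !ffunE.
by move=> H; apply/ffunP => j; rewrite !ffunE; apply: H.
Qed.

Lemma pair_eq (A B : Type) (a a' : A) (b b' : B) : (a, b) = (a', b') <-> a = a' /\ b = b'.
Proof. by split; [case=> -> ->|case=> -> ->]. Qed.

Section Join.
Variables (T : Om -> Om) (w0 : Om).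
Hypothesis mT : measurable_fun setT T.
Hypothesis muT : forall B, measurable B -> mu (T @^-1` B) = mu B.

Lemma D_ge0 (I : finType) (g : Om -> I) n : mfin g ->
  Hf (jn g T n) <= Hf (jn g T n.+1).
Proof.
move=> mg; have [] := Hf_le w0 (mfin_jn (n:=n.+1) mT mg) (g := jn g T n) => //.
by move=> w w' /jn_eq H; apply/jn_eq => k kn; apply: H; rewrite ltnS ltnW.
Qed.

Lemma D_noninc (I : finType) (g : Om -> I) n : mfin g ->
  Hf (jn g T n.+2) - Hf (jn g T n.+1) <= Hf (jn g T n.+1) - Hf (jn g T n).
Proof.
move=> mg.
pose f1 := g. pose f2 := jn g T n \o T. pose f3 := fun w => g (iter n.+1 T w).
have E123 w w' : ((f1 w, f2 w), f3 w) = ((f1 w', f2 w'), f3 w') <->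
    jn g T n.+2 w = jn g T n.+2 w'.
  rewrite jn_eq !pair_eq /f2 /= jn_eq; split.
    move=> [[e1 e2] e3] [|k] //; rewrite ltnS leq_eqVlt => /orP [/eqP->//|kn].
    by rewrite !iterSr; apply: e2.
  move=> H; split; [split|].
  - exact: (H 0%N).
  - by move=> k kn; rewrite -!iterSr; apply: H; rewrite ltnS ltnW.
  - by apply: H.
have E12 w w' : (f1 w, f2 w) = (f1 w', f2 w') <-> jn g T n.+1 w = jn g T n.+1 w'.
  rewrite jn_eq !pair_eq /f2 /= jn_eq; split.
    move=> [e1 e2] [|k] //; rewrite ltnS => kn.
    by rewrite !iterSr; apply: e2.
  move=> H; split; first exact: (H 0%N).
  by move=> k kn; rewrite -!iterSr; apply: H.
have E23 w w' : (f2 w, f3 w) = (f2 w', f3 w') <->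
    (jn g T n.+1 \o T) w = (jn g T n.+1 \o T) w'.
  rewrite /= jn_eq !pair_eq /f2 /= jn_eq; split.
    move=> [e2 e3] k; rewrite ltnS leq_eqVlt => /orP [/eqP->|kn].
      by rewrite -!iterSr.
    by apply: e2.
  move=> H; split; first by move=> k kn; apply: H; rewrite ltnS ltnW.
  by rewrite /f3 !iterSr; apply: H.
have mj2 := mfin_jn (n:=n.+2) mT mg.
have [_ m123] := Hf_le w0 mj2 (g := fun w => ((f1 w, f2 w), f3 w))
  (fun w w' e => (proj2 (E123 w w') e)).
have := Hf_submod m123.
have m12 : mfin (fun w => (f1 w, f2 w)).
  exact: mfin_comp (fun k => k.1) m123.
rewrite (Hf_same w0 m123 E123) (Hf_same w0 m12 E12).
have m23 : mfin (fun w => (f2 w, f3 w)).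
  exact: mfin_comp (fun k => (k.1.2, k.2)) m123.
rewrite (Hf_same w0 m23 E23) Hf_T//; last exact: mfin_jn.
rewrite /f2 Hf_T//; last exact: mfin_jn.
lra.
Qed.

Lemma h_part_fib (I : finType) (g : Om -> I) :
  h_part mu T (fib g) = limn (fun n => Hf (jn g T n.+1) - Hf (jn g T n)).
Proof. rewrite /h_part (_ : (fun n => _) = (fun n => Hf (jn g T n.+1) - Hf (jn g T n)))//. apply/funext => n; by rewrite !joinP_fib. Qed.

Lemma jn1 (I : finType) (g : Om -> I) : mfin g -> Hf (jn g T 1) = Hf g.
Proof.
move=> mg; apply: (Hf_same w0 (mfin_jn (n:=1) mT mg)) => w w'; rewrite jn_eq.
by split; [move=> /(_ 0%N erefl)|move=> H [|]].
Qed.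

Lemma h_part_bound (I : finType) (g : Om -> I) : mfin g ->
  0 <= h_part mu T (fib g) <= Hf (jn g T 2) - Hf g.
Proof.
move=> mg; rewrite h_part_fib -(jn1 mg).
set u := fun n => _.
have ni : nonincreasing_seq u.
  by apply/nonincreasing_seqP => n; apply: D_noninc.
have u0 n : 0 <= u n by rewrite /u subr_ge0 D_ge0.
have cu : cvgn u.
  by apply: nonincreasing_is_cvgn => //; exists 0 => _ [n _ <-].
apply/andP; split.
  by apply: limr_ge => //; apply: nearW.
exact: (nonincreasing_cvgn_ge ni cu 1).
Qed.

End Join.

End Core.

End Part1.
Import Part1.

Module Part2.
Local Set Implicit Arguments. Local Unset Strict Implicit.
Section Pat.
Context (R : realType) (dd : nat).
Local Notation n := dd.+1.
Implicit Types (x y : 'I_n -> R).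

Definition ltx x (i j : 'I_n) : bool := (x j < x i) || ((x i == x j) && (j < i)%N).

Lemma hp_iff x (pi : 'S_n) : has_pattern x pi <->
  forall l, (l < dd)%N -> ltx x (pi (inord l)) (pi (inord l.+1)).
Proof.
rewrite /has_pattern /ltx; split => H l ldd; have := H l ldd.
  move=> [+ E]; rewrite le_eqVlt => /orP [/eqP e|->//].
  by rewrite e eqxx (E (esym e)) orbT.
move=> /orP [lt|/andP [/eqP e ba]]; split.
- exact: ltW.
- by move=> e; rewrite e ltxx in lt.
- by rewrite e.
- by [].
Qed.

Lemma ltx_irr x i : ltx x i i = false.
Proof. by rewrite /ltx ltxx eqxx ltnn. Qed.

Lemma ltx_trans x i j k : ltx x i j -> ltx x j k -> ltx x i k.
Proof.
rewrite /ltx => /orP[h1|/andP[/eqP e1 h1]] /orP[h2|/andP[/eqP e2 h2]].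
- by rewrite (lt_trans h2 h1).
- by rewrite -e2 h1.
- by rewrite e1 h2.
- by rewrite e1 e2 eqxx (ltn_trans h2 h1) orbT.
Qed.

Lemma ltx_asym x i j : ltx x i j -> ltx x j i = false.
Proof.
move=> h; apply/negP => h'; have := ltx_trans h h'; by rewrite ltx_irr.
Qed.

Lemma ltx_total x i j : i != j -> ltx x i j || ltx x j i.
Proof.
move=> ij; rewrite /ltx; case: (ltrgtP (x i) (x j)) => [h|h|e]; rewrite ?orbT //=.
by move: ij; rewrite neq_ltn orbC.
Qed.

Lemma hp_lt x pi : has_pattern x pi -> forall a b : 'I_n, (a < b)%N -> ltx x (pi a) (pi b).
Proof.
move/hp_iff => H.
have step l k : (l + k < dd)%N -> ltx x (pi (inord l)) (pi (inord (l + k).+1)).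
  elim: k => [|k IH] lk; first by rewrite addn0 in lk *; apply: H.
  apply: ltx_trans (IH _) _; first by rewrite addnS in lk; apply: ltnW.
  by rewrite addnS; apply: H; rewrite -addnS.
move=> a b ab.
have e : (a + (b - a.+1)).+1 = b by lia.
have lk : (a + (b - a.+1) < dd)%N by have := ltn_ord b; lia.
by have := step a _ lk; rewrite e !inord_val.
Qed.

Lemma hp_ltE x pi a b : has_pattern x pi -> ltx x (pi a) (pi b) = (a < b)%N.
Proof.
move=> h; case: (ltngtP a b) => [ab|ba|/val_inj->].
- exact: hp_lt.
- by rewrite ltx_asym // hp_lt.
- by rewrite ltx_irr.
Qed.

Lemma hp_ltx x pi i j : has_pattern x pi -> ltx x i j = ((pi^-1)%g i < (pi^-1)%g j)%N.
Proof. by move=> h; rewrite -(hp_ltE _ _ h) !permKV. Qed.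

Lemma mono_ge (f : 'I_n -> 'I_n) : (forall a b : 'I_n, (a < b)%N -> (f a < f b)%N) ->
  forall a : 'I_n, (a <= f a)%N.
Proof.
move=> mf [k]; elim: k => [//|k IH] hk.
have hk' : (k < n)%N by apply: ltnW.
have := IH hk'; have := mf (Ordinal hk') (Ordinal hk) (ltnSn k) => /=; lia.
Qed.

Lemma hp_uniq x pi pi' : has_pattern x pi -> has_pattern x pi' -> pi = pi'.
Proof.
move=> h h'.
have ms : forall a b : 'I_n, (a < b)%N -> ((pi'^-1)%g (pi a) < (pi'^-1)%g (pi b))%N.
  by move=> a b ab; rewrite -(hp_ltx _ _ h') hp_ltE.
have mt : forall a b : 'I_n, (a < b)%N -> ((pi^-1)%g (pi' a) < (pi^-1)%g (pi' b))%N.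
  by move=> a b ab; rewrite -(hp_ltx _ _ h) hp_ltE.
apply/permP => a.
have g1 := mono_ge ms a.
have g2 := mono_ge mt ((pi'^-1)%g (pi a)).
rewrite permKV permK in g2.
have : (pi'^-1)%g (pi a) = a by apply/val_inj/eqP; rewrite eqn_leq g1 g2.
by move=> /(congr1 pi'); rewrite permKV.
Qed.

Lemma hp_exists x : exists pi, has_pattern x pi.
Proof.
pose le i j := (i == j) || ltx x i j.
have tot : total le.
  move=> i j; case: (eqVneq i j) => [->|ij]; first by rewrite /le eqxx.
  by rewrite /le (negbTE ij) eq_sym (negbTE ij) /= ltx_total.
pose s := sort le (enum 'I_n).
have us : uniq s by rewrite sort_uniq enum_uniq.
have ss : size s = n by rewrite size_sort size_enum_ord.
have srt : sorted le s := sort_sorted tot _.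
pose f (i : 'I_n) := nth ord0 s i.
have fi : injective f.
  move=> i j /eqP; rewrite /f nth_uniq ?ss // => /eqP e; exact: val_inj.
exists (perm fi); apply/hp_iff => l ll; rewrite !permE /f.
rewrite !inordK; [|lia|lia].
have /(sortedP ord0) H := srt.
have := H l; rewrite ss ltnS => /(_ ll); rewrite /le nth_uniq ?ss. all: lia.
Qed.

Definition pat x : 'S_n := xget 1%g [set pi | has_pattern x pi].

Lemma pat_hp x : has_pattern x (pat x).
Proof.
rewrite /pat; case: xgetP => // H; have [pi hp] := hp_exists x; by case: (H pi hp).
Qed.

Lemma hp_pat x pi : has_pattern x pi <-> pat x = pi.
Proof.
split; first by move=> h; apply: hp_uniq (pat_hp x) h.
by move=> <-; exact: pat_hp.
Qed.

Lemma pat_ext x y : (forall i j, ltx x i j = ltx y i j) -> pat x = pat y.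
Proof.
move=> e; apply/hp_pat; have := pat_hp y; rewrite !hp_iff => H l ll.
by rewrite e; apply: H.
Qed.

Lemma pat_ltx x y : pat x = pat y -> forall i j, ltx x i j = ltx y i j.
Proof. by move=> e i j; rewrite (hp_ltx _ _ (pat_hp x)) (hp_ltx _ _ (pat_hp y)) e. Qed.

End Pat.

End Part2.
Import Part2.

Module Part3.
Lemma ltx_sub (R : realType) (m : nat) (y : 'I_m.+1 -> R) (z : 'I_m.+2 -> R)
  (e : 'I_m.+1 -> 'I_m.+2) :
  (forall c, y c = z (e c)) -> (forall a b : 'I_m.+1, (a < b)%N = (e a < e b)%N) ->
  forall a b, ltx y a b = ltx z (e a) (e b).
Proof. by move=> yz ee a b; rewrite /ltx !yz ee. Qed.

Section Ord.
Context (R : realType) (d : measure_display) (Om : measurableType d)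
  (mu : probability Om R) (T : Om -> Om) (w0 : Om) (N : nat) (X : 'I_N -> Om -> R).
Hypothesis mT : measurable_fun setT T.
Hypothesis muT : forall B, measurable B -> mu (T @^-1` B) = mu B.
Hypothesis mX : forall i, measurable_fun setT (X i).

Lemma Hf_ge0 (I : finType) (f : Om -> I) : mfin f -> 0 <= Hf mu f.
Proof.
move=> mf; rewrite HfE oppr_ge0; apply: sumr_le0 => i _.
by rewrite mulr_ge0_le0 ?pr_ge0 ?ln_le0 ?pr_le1.
Qed.

Definition win (dd : nat) (i : 'I_N) (w : Om) : 'I_dd.+1 -> R :=
  fun k => X i (iter (dd - k) T w).
Arguments win : clear implicits.

Definition og dd (w : Om) : {ffun 'I_N -> 'S_dd.+1} := [ffun i => pat (win dd i w)].
Arguments og : clear implicits.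

Lemma ord_part_fib dd : ord_part T X dd = fib (og dd).
Proof.
apply/funext => pis; apply/seteqP; split => w; rewrite /ord_part /fib /og /=.
  by move=> H; apply/ffunP => i; rewrite ffunE; apply/hp_pat; exact: H i.
by move=> <- i; rewrite ffunE; exact: pat_hp.
Qed.

Lemma iter_meas k : measurable_fun setT (iter k T).
Proof.
elim: k => [|k IH] /=; first exact: measurable_id.
exact: measurableT_comp.
Qed.

Lemma mfin_bool (b : Om -> bool) : measurable_fun setT b -> mfin b.
Proof. by move=> mb v; have := mb measurableT [set v] I; rewrite setTI. Qed.

Definition Lm dd (w : Om) : {ffun 'I_N -> {ffun 'I_dd.+1 * 'I_dd.+1 -> bool}} :=
  [ffun i => [ffun ab => ltx (win dd i w) ab.1 ab.2]].
Arguments Lm : clear implicits.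

Lemma mfin_Lm dd : mfin (Lm dd).
Proof.
apply: mfin_ffun => i; apply: mfin_ffun => -[a b]; apply: mfin_bool => /=.
have mc k : measurable_fun setT (fun w => win dd i w k).
  exact: measurableT_comp (mX i) (iter_meas _).
apply: measurable_or; first exact: measurable_realfun.measurable_fun_ltr.
apply: measurable_and; first exact: measurable_realfun.measurable_fun_eqr.
exact: measurable_cst.
Qed.

Lemma mfin_og dd : mfin (og dd).
Proof.
have [] := Hf_le mu w0 (mfin_Lm dd) (g := og dd) => // w w' /ffunP e.
apply/ffunP => i; rewrite !ffunE; apply: pat_ext => a b.
by have := e i => /ffunP /(_ (a, b)); rewrite !ffunE.
Qed.

Lemma cond_le_sort dd :
  Hf mu (jn (og dd) T 2) <= Hf mu (og dd.+1).
Proof.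
have [] := Hf_le mu w0 (mfin_og dd.+1) (g := jn (og dd) T 2) => // w w' /ffunP e.
apply/jn_eq => k k2; apply/ffunP => i; rewrite !ffunE; apply: pat_ext => a b.
have := e i; rewrite !ffunE => /pat_ltx el.
pose ek (c : 'I_dd.+1) : 'I_dd.+2 := inord (c + 1 - k).
have ekE c : nat_of_ord (ek c) = (c + 1 - k)%N.
  by rewrite /ek inordK //; have := ltn_ord c; lia.
have ee : forall a b : 'I_dd.+1, (a < b)%N = (ek a < ek b)%N.
  by move=> a' b'; rewrite !ekE; lia.
have wE v c : win dd i (iter k T v) c = win dd.+1 i v (ek c).
  rewrite /win ekE -iterD; congr (X i (iter _ T v)).
  by have := ltn_ord c; lia.
by rewrite (ltx_sub _ _ _ _ _ (wE w) ee) (ltx_sub _ _ _ _ _ (wE w') ee) el.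
Qed.

End Ord.

End Part3.
Import Part3.

Module Part4.
Local Set Implicit Arguments. Local Unset Strict Implicit.
Module SeqL.
Import numFieldNormedType.Exports.
Section Seq.
Context (R : realType).
Local Open Scope ereal_scope.

Lemma esup_le_ev (u v : (\bar R)^nat) (N : nat) :
  (forall n, (N <= n)%N -> u n <= v n) -> limn_esup u <= limn_esup v.
Proof.
move=> uv; rewrite !limn_esup_lim; apply: lee_lim; [exact: is_cvg_esups|exact: is_cvg_esups|].
near=> n; apply: ge_ereal_sup => _ [k /= nk <-].
apply: le_trans (uv k _) _; first by apply: leq_trans nk; near: n; exists N.
by apply: ereal_sup_ubound; exists k.
Unshelve. all: by end_near. Qed.

Lemma esup_shift (u : (\bar R)^nat) : limn_esup (fun n => u n.+1) <= limn_esup u.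
Proof.
rewrite !limn_esup_lim; apply: lee_lim; [exact: is_cvg_esups|exact: is_cvg_esups|].
apply: nearW => n; apply: ge_ereal_sup => _ [k /= nk <-].
by apply: ereal_sup_ubound; exists k.+1 => //=; apply: leqW.
Qed.

Lemma esup_cvg (u : (\bar R)^nat) l : u @ \oo --> l -> limn_esup u = l.
Proof. by move=> ul; have [_ ->] := cvg_limn_einf_sup ul. Qed.

Lemma esup_ge0 (u : R^nat) : (forall n, (0 <= u n)%R) ->
  0 <= limn_esup (fun n => (u n)%:E).
Proof.
move=> u0; have c0 : (fun _ : nat => (0 : \bar R)) @ \oo --> 0 by apply: cvg_cst.
rewrite -(esup_cvg c0).
by apply: (esup_le_ev (N := 0%N)) => n _; rewrite lee_fin.
Qed.

Lemma cesaro_ge (H : nat -> R) (l : \bar R) : (forall n, (0 <= H n)%R) ->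
  ((fun n => (H n.+1 - H n)%:E) @ \oo --> l) ->
  l <= limn_esup (fun n => (H n / n%:R)%:E).
Proof.
move=> H0 sl; set L := limn_esup _.
have L0 : 0 <= L by apply: esup_ge0 => n; rewrite divr_ge0.
have claim : forall M : R, M%:E < l -> M%:E <= L.
  move=> M Ml; have [M0|M0] := leP M 0%R; first by apply: le_trans L0; rewrite lee_fin.
  have := sl _ (open_ereal_gt' Ml) => -[K _ HK].
  have HK' n : (K <= n)%N -> (M <= H n.+1 - H n)%R.
    by move=> Kn; have := HK n Kn; rewrite /= lte_fin => /ltW.
  have Hge n : (H K + (n%:R) * M <= H (K + n)%N)%R.
    elim: n => [|n IH]; first by rewrite mul0r addr0 addn0.
    have := HK' (K + n)%N (leq_addr _ _); rewrite addnS mulrSr; lra.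
  pose v n := (M - K%:R * M * harmonic n)%R.
  have vM : (fun n => (v n)%:E) @ \oo --> M%:E.
    apply: cvg_EFin; first exact: nearW.
    suff: (fun n : nat => v n) @ \oo --> (M - K%:R * M * 0)%R by rewrite mulr0 subr0.
    apply: cvgB; first exact: cvg_cst.
    apply: cvgM; first exact: cvg_cst.
    exact: cvg_harmonic.
  rewrite -(esup_cvg vM); apply: le_trans (esup_shift _).
  apply: (esup_le_ev (N := K)) => n Kn; rewrite lee_fin /v /=.
  have e : n.+1 = (K + (n.+1 - K))%N by lia.
  have h1 := Hge (n.+1 - K)%N; rewrite -e in h1.
  have np : (0 < n.+1%:R :> R)%R by rewrite ltr0n.
  rewrite ler_pdivlMr // mulrBl divfK ?gt_eqF //.
  rewrite natrB in h1; last by lia.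
  have := H0 K; lra.
case: l sl claim => [r| |] sl claim; last 2 first.
- case: L claim L0 => [r'| |] claim L0 //.
  + by have := claim (r' + 1)%R (ltry _); rewrite lee_fin => h; exfalso; clear L0 claim sl; lra.
- by rewrite leNye.
apply/lee_subgt0Pr => e e0; rewrite -EFinB; apply: claim.
by rewrite lte_fin; lra.
Qed.

End Seq.
End SeqL.

End Part4.
Import Part4.

Theorem corollary1 (R : realType) (S : ptopologicalType)
  (mu : probability (borel S) R) (T : borel S -> borel S)
  (N : nat) (X : 'I_N -> borel S -> R) :
  measurable_fun setT T ->
  (forall B : set (borel S), measurable B -> mu (T @^-1` B) = mu B) ->
  (0 < N)%N ->
  (forall i, measurable_fun setT (X i)) ->
  ((fun dd => (h_part mu T (ord_part T X dd))%:E) @ \oo --> hKS mu T)%E ->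
  ((exists d0 : nat, (1 <= d0)%N /\
      forall dd, (d0 <= dd)%N -> perm_ent mu T X dd.+1 <= perm_ent mu T X dd)
   \/ (exists l : \bar R, ((fun dd => (sort_ent mu T X dd)%:E) @ \oo --> l)%E)) ->
  hKS mu T = limn_esup (fun dd => (perm_ent mu T X dd)%:E) ->
  hKS mu T = limn_esup (fun dd => (cond_ent mu T X dd)%:E).
Proof.
move=> mT muT _ mX hcv hab hp.
pose w0 : borel S := point.
pose H dd := Hf mu (og R _ _ T N X dd).
have mog dd := mfin_og R _ _ mu T w0 N X mT mX dd.
have H0 dd : 0 <= H dd by exact: Hf_ge0 _ _ _ mu _ _ (mog dd).
have pE dd : perm_ent mu T X dd = H dd / dd%:R by rewrite /perm_ent ord_part_fib.
have sE dd : sort_ent mu T X dd = H dd.+1 - H dd by rewrite /sort_ent !ord_part_fib.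
have cE dd : cond_ent mu T X dd = Hf mu (jn (og R _ _ T N X dd) T 2) - H dd.
  by rewrite /cond_ent ord_part_fib joinP_fib.
have hc dd : 0 <= h_part mu T (ord_part T X dd) <= cond_ent mu T X dd.
  rewrite cE ord_part_fib; exact: (h_part_bound w0 mT muT (mog dd)).
have cs dd : cond_ent mu T X dd <= sort_ent mu T X dd.
  by rewrite cE sE lerD2r; apply: cond_le_sort.
have Lh := SeqL.esup_cvg hcv.
apply/eqP; rewrite eq_le; apply/andP; split.
  rewrite -Lh; apply: (SeqL.esup_le_ev (N := 0%N)) => dd _.
  by rewrite lee_fin; case/andP: (hc dd).
apply: le_trans (SeqL.esup_le_ev (v := fun dd => (sort_ent mu T X dd)%:E) (N := 0%N) _) _.
  by move=> dd _; rewrite lee_fin.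
case: hab => [[d0 [d01 Hd]]|[l sl]].
  rewrite hp; apply: le_trans (SeqL.esup_shift (fun n => (perm_ent mu T X n)%:E)).
  apply: (SeqL.esup_le_ev (N := d0)) => dd ddd; rewrite lee_fin.
  have := Hd dd ddd; rewrite !pE sE.
  have m0 : 0 < dd%:R :> R by rewrite ltr0n; apply: leq_trans ddd.
  set a := H dd.+1; set b := H dd; set m := dd%:R.
  have m1 : dd.+1%:R = m + 1 :> R by rewrite -addn1 natrD.
  rewrite m1.
  set q := a / (m + 1); set r := b / m => qr.
  have ha : a = q * (m + 1) by rewrite /q divfK // gt_eqF // addr_gt0.
  have hb : b = r * m by rewrite /r divfK // gt_eqF.
  rewrite ha hb; have : q * m <= r * m by rewrite ler_wpM2r // ltW.
  lra.
rewrite (SeqL.esup_cvg sl) hp.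
rewrite (_ : (fun dd => (perm_ent mu T X dd)%:E) = (fun dd => (H dd / dd%:R)%:E)); last first.
  by apply/funext => dd; rewrite pE.
apply: SeqL.cesaro_ge => //.
by rewrite (_ : (fun n => (H n.+1 - H n)%:E) = (fun dd => (sort_ent mu T X dd)%:E)) //;
  apply/funext => dd; rewrite sE.
Qed.
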